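(* Let $V,W$ be $d$-dimensional real vector spaces, $1\le k\le d-1$, and $A,B\in\operatorname{Hom}(V,W)$ with $\bigwedge^kA=\bigwedge^kB$ and $\operatorname{rank}A>k$. Then $A=\pm B$. If $k$ is odd, then $A=B$.
   Context: $\bigwedge^kA:\bigwedge^kV\to\bigwedge^kW$ is defined by $v_1\wedge\dots\wedge v_k\mapsto Av_1\wedge\dots\wedge Av_k$. *)

(* Defs.v *)
From HB Require Import structures.
From mathcomp Require Import all_boot all_order all_algebra.
Set Implicit Arguments. Unset Strict Implicit. Unset Printing Implicit Defensive.
Import Order.TTheory GRing.Theory Num.Theory.
Local Open Scope ring_scope.

(* Strictly increasing k-tuples of indices in 'I_d, i.e. k-element subsets
   I = {i_1 < ... < i_k} of {0,..,d-1}; they index the standard basis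
   e_{i_1} /\ ... /\ e_{i_k} of the k-th exterior power of R^d. *)
Definition incr (d k : nat) (f : {ffun 'I_k -> 'I_d}) : bool :=
  [forall i : 'I_k, forall j : 'I_k, (i < j)%N ==> (f i < f j)%N].

Definition ksub (d k : nat) := {f : {ffun 'I_k -> 'I_d} | incr f}.

Definition minor (R : comRingType) (d k : nat) (A : 'M[R]_d)
  (f g : {ffun 'I_k -> 'I_d}) : R :=
  \det (\matrix_(i < k, j < k) A (f i) (g j)).

(* The k-th exterior power /\^k A, given by its matrix in the standard
   bases {e_I} of /\^k R^d: the coefficient of e_I in
   /\^k A (e_J) = A e_{j_1} /\ ... /\ A e_{j_k} is the (I,J)-minor of A
   (k-th compound matrix). *)
Definition ext_pow (R : comRingType) (d k : nat) (A : 'M[R]_d)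
  : {ffun ksub d k * ksub d k -> R} :=
  [ffun IJ => minor A (val IJ.1) (val IJ.2)].

(* Main.v *)
Require Import Defs.
From HB Require Import structures.
From mathcomp Require Import all_boot all_order all_algebra all_fingroup.
Import Order.TTheory GRing.Theory Num.Theory.
Local Open Scope ring_scope.
Set Implicit Arguments. Unset Strict Implicit. Unset Printing Implicit Defensive.

Lemma sortP d k (f : 'I_k -> 'I_d) : injective f ->
  exists (h : {ffun 'I_k -> 'I_d}) (s : 'S_k), incr h /\ forall i, f i = h (s i).
Proof.
move=> finj.
pose S := [set f i | i : 'I_k].
pose e := enum S.
have sz : size e = k by rewrite -cardE card_imset // card_ord.
have fe : forall i, f i \in e by move=> i; rewrite mem_enum; apply: imset_f.
have srt : sorted (fun x y : 'I_d => (x < y)%N) e.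
  rewrite /e /enum_mem; apply: sorted_filter; first exact: ltn_trans.
  have := iota_ltn_sorted 0 d; rewrite -val_enum_ord sorted_map enumT.
  by [].
have sidx : forall i, (index (f i) e < k)%N by move=> i; rewrite -sz index_mem.
pose sf := fun i => Ordinal (sidx i).
have sinj : injective sf.
  move=> i j /(congr1 val) /= eqij; apply: finj.
  by rewrite -(nth_index (f i) (fe i)) eqij nth_index.
exists [ffun i : 'I_k => nth (f i) e i], (perm sinj); split.
  apply/forallP => i; apply/forallP => j; apply/implyP => ij; rewrite !ffunE.
  rewrite (set_nth_default (f j)) ?sz //.
  have tr : transitive (fun x y : 'I_d => (x < y)%N) by move=> y x z; apply: ltn_trans.
  by apply: (sorted_ltn_nth tr (f j) srt) => //; rewrite inE sz.
by move=> i; rewrite ffunE permE /= nth_index.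
Qed.

Lemma det_mxsub0 (R : comNzRingType) d k (A : 'M[R]_d) (f g : 'I_k -> 'I_d) :
  ~~ injectiveb f \/ ~~ injectiveb g -> \det (mxsub f g A) = 0.
Proof.
case=> [/injectivePn [x [y nxy fxy]] | /injectivePn [x [y nxy gxy]]].
  by apply: (determinant_alternate nxy) => j; rewrite !mxE fxy.
rewrite -det_tr; apply: (determinant_alternate nxy) => j; rewrite !mxE gxy.
by [].
Qed.

Lemma det_mxsub_perm (R : comNzRingType) d k (A : 'M[R]_d)
  (h h' : 'I_k -> 'I_d) (s s' : 'S_k) :
  \det (mxsub (h \o s) (h' \o s') A) =
  \det (perm_mx s) * \det (perm_mx s'^-1) * \det (mxsub h h' A).
Proof.
have -> : mxsub (h \o s) (h' \o s') A = row_perm s (col_perm s' (mxsub h h' A)).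
  by apply/matrixP => i j; rewrite !mxE.
by rewrite row_permE col_permE !det_mulmx mulrA mulrAC.
Qed.

Lemma det_gen (R : comNzRingType) d k (A B : 'M[R]_d) :
  (forall h g : {ffun 'I_k -> 'I_d}, incr h -> incr g ->
     \det (mxsub h g A) = \det (mxsub h g B)) ->
  forall f g : 'I_k -> 'I_d, \det (mxsub f g A) = \det (mxsub f g B).
Proof.
move=> H f g.
have [fi|fni] := boolP (injectiveb f); last by rewrite !det_mxsub0 //; left.
have [gi|gni] := boolP (injectiveb g); last by rewrite !det_mxsub0 //; right.
have [h [s [hi hs]]] := sortP (injectiveP _ fi).
have [h' [s' [hi' hs']]] := sortP (injectiveP _ gi).
have E : forall M : 'M[R]_d, mxsub f g M = mxsub ((fun i => h i) \o s) ((fun i => h' i) \o s') M.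
  by move=> M; apply/matrixP => i j; rewrite !mxE /= hs hs'.
rewrite !E !det_mxsub_perm.
by rewrite (H h h' hi hi').
Qed.

Lemma cof_mxsub (R : comNzRingType) d k (A : 'M[R]_d) (f g : 'I_k.+1 -> 'I_d) i j :
  cofactor (mxsub f g A) i j =
  (-1) ^+ (i + j) * \det (mxsub (f \o lift i) (g \o lift j) A).
Proof.
rewrite /cofactor; congr (_ * \det _).
by apply/matrixP => a b; rewrite !mxE.
Qed.

Lemma adj_gen (R : comNzRingType) d k (A B : 'M[R]_d) :
  (forall f g : 'I_k -> 'I_d, \det (mxsub f g A) = \det (mxsub f g B)) ->
  forall f g : 'I_k.+1 -> 'I_d, \adj (mxsub f g A) = \adj (mxsub f g B).
Proof.
move=> H f g; apply/matrixP => i j; rewrite !mxE !cof_mxsub H //.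
Qed.

Lemma core (R : fieldType) n (X Y : 'M[R]_n.+2) c p :
  \adj X = \adj Y -> (forall r, r != p -> forall s, Y r s = c * X r s) ->
  (exists q, \adj X q p != 0) -> forall s, Y p s = c * X p s.
Proof.
move=> HA Hr [q Hq].
have E : \adj X *m (Y - c *: X) = (\det Y - c * \det X)%:M.
  rewrite mulmxBr -scalemxAr mul_adj_mx HA mul_adj_mx.
  by rewrite scale_scalar_mx raddfB.
have ent : forall a b, \adj X a p * (Y p b - c * X p b) =
    (\det Y - c * \det X) *+ (a == b).
  move=> a b; have := congr1 (fun M : 'M[R]_n.+2 => M a b) E; rewrite !mxE => <-.
  rewrite (bigD1 p) //= big1 ?addr0; first by rewrite !mxE.
  by move=> r /Hr Hr'; rewrite !mxE Hr' subrr mulr0.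
pose a := lift q (ord0 : 'I_n.+1).
have aq : q != a by apply: neq_lift.
have Dpa : Y p a - c * X p a = 0.
  by have := ent q a; rewrite (negPf aq) mulr0n => /eqP; rewrite mulf_eq0 (negPf Hq) => /eqP.
have z0 : \det Y - c * \det X = 0 by have := ent a a; rewrite eqxx mulr1n Dpa mulr0.
move=> s; apply/eqP; rewrite -subr_eq0; apply/eqP.
by have := ent q s; rewrite z0 mul0rn => /eqP; rewrite mulf_eq0 (negPf Hq) => /eqP.
Qed.

Lemma core_tr (R : fieldType) n (X Y : 'M[R]_n.+2) c q :
  \adj X = \adj Y -> (forall s, s != q -> forall r, Y r s = c * X r s) ->
  (exists p, \adj X q p != 0) -> forall r, Y r q = c * X r q.
Proof.
move=> HA Hs [p Hp] r.
have := @core R n X^T Y^T c q; rewrite -!trmx_adj HA => /(_ erefl).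
move=> /(_ _ _ r); rewrite !mxE; apply.
  by move=> s sq t; rewrite !mxE; apply: Hs.
by exists p; rewrite mxE -HA.
Qed.

Lemma exists_inv (R : fieldType) d r (A : 'M[R]_d) : (r <= \rank A)%N ->
  exists f g : 'I_r -> 'I_d, \det (mxsub f g A) != 0.
Proof.
move=> H.
pose w : 'I_r -> 'I_(\rank A) := widen_ord H.
pose f := fun i => maxrankfun A (w i).
have A2free : row_free (rowsub f A).
  have /row_freeP [B0 HB0] := maxrowsub_free A.
  apply/row_freeP; exists (B0 *m \matrix_(a, b) (a == w b)%:R).
  have -> : rowsub f A = rowsub w 1%:M *m rowsub (maxrankfun A) A.
    by rewrite -rowsubE; apply/matrixP => i j; rewrite !mxE.
  rewrite mulmxA -(mulmxA (rowsub w 1%:M)) HB0 mulmx1.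
  apply/matrixP => i j; rewrite !mxE (bigD1 (w i)) //= big1.
    rewrite !mxE eqxx mul1r addr0.
    have -> : (w i == w j) = (i == j).
      by apply/eqP/eqP => [/(congr1 val) /= /val_inj | ->].
    by [].
  by move=> a /negPf ai; rewrite !mxE eq_sym ai mul0r.
have full : row_full (rowsub f A)^T by rewrite /row_full mxrank_tr.
exists f, (fullrankfun full).
have := fullrowsub_unit full.
rewrite unitmxE -det_tr unitfE.
have -> : (rowsub (fullrankfun full) (rowsub f A)^T)^T = mxsub f (fullrankfun full) A.
  by apply/matrixP => i j; rewrite !mxE.
by [].
Qed.

Lemma cof_eq (R : comNzRingType) d k (A : 'M[R]_d) (f f' g g' : 'I_k.+1 -> 'I_d) p q :
  (forall x, f (lift p x) = f' (lift p x)) -> (forall x, g (lift q x) = g' (lift q x)) ->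
  cofactor (mxsub f g A) p q = cofactor (mxsub f' g' A) p q.
Proof.
move=> Hf Hg; rewrite !cof_mxsub; congr (_ * \det _).
by apply/matrixP => a b; rewrite !mxE /= Hf Hg.
Qed.

Lemma col_nz (R : fieldType) n (X : 'M[R]_n) p : \det X != 0 -> exists q, \adj X q p != 0.
Proof.
move=> H; case: (pickP (fun q => \adj X q p != 0)) => [q Hq | H0]; first by exists q.
have := congr1 (fun M : 'M[R]_n => M p p) (mul_mx_adj X); rewrite !mxE eqxx mulr1n.
rewrite big1 => [E|q _]; first by rewrite -E eqxx in H.
by have := H0 q; rewrite /= => /negbFE /eqP ->; rewrite mulr0.
Qed.

Lemma row_nz (R : fieldType) n (X : 'M[R]_n) q : \det X != 0 -> exists p, \adj X q p != 0.
Proof.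
move=> H; case: (pickP (fun p => \adj X q p != 0)) => [p Hp | H0]; first by exists p.
have := congr1 (fun M : 'M[R]_n => M q q) (mul_adj_mx X); rewrite !mxE eqxx mulr1n.
rewrite big1 => [E|p _]; first by rewrite -E eqxx in H.
by have := H0 p; rewrite /= => /negbFE /eqP ->; rewrite mul0r.
Qed.

Theorem mainTheorem12 (R : realFieldType) (d k : nat) (A B : 'M[R]_d) :
  (1 <= k)%N -> (k <= d - 1)%N ->
  ext_pow k A = ext_pow k B ->
  (k < \rank A)%N ->
  (A = B \/ A = - B) /\ (odd k -> A = B).
Proof.
move=> k1 _ Hext Hrk.
have Hgen : forall h g : {ffun 'I_k -> 'I_d}, incr h -> incr g ->
    \det (mxsub h g A) = \det (mxsub h g B).
  move=> h g hi gi.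
  have := congr1 (fun F : {ffun ksub d k * ksub d k -> R} =>
     F ((exist _ h hi : ksub d k), (exist _ g gi : ksub d k))) Hext.
  by rewrite !ffunE.
have Hdet := det_gen Hgen.
have Hadj := adj_gen Hdet.
clear Hext; case: k k1 Hrk Hgen Hdet Hadj => // k _ Hrk _ _ Hadj.
have [f [g Hfg]] := exists_inv Hrk.
set X := mxsub f g A in Hfg.
set Y := mxsub f g B.
have HA : \adj X = \adj Y by apply: Hadj.
have e : \det X *: Y = \det Y *: X.
  rewrite -mul_mx_scalar -mul_scalar_mx -(mul_adj_mx X) -(mul_mx_adj Y).
  by rewrite HA mulmxA.
have Yn : \det Y != 0.
  apply/eqP => Y0; move: e; rewrite Y0 scale0r => /eqP; rewrite scaler_eq0 (negPf Hfg) /=.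
  move=> /eqP Y00.
  have := mul_mx_adj X; rewrite HA Y00 -(scale0r 0) adjZ /= expr0n /= scale0r mulmx0.
  move=> E; move: Hfg.
  have := congr1 (fun M : 'M[R]_k.+2 => M ord0 ord0) E; rewrite !mxE eqxx mulr1n => <-.
  by rewrite eqxx.
pose c := \det Y / \det X.
have YcX : Y = c *: X.
  apply: (scalerI Hfg); by rewrite e scalerA /c mulrCA mulfV // mulr1.
have ck : c ^+ k.+1 = 1.
  have := congr1 determinant YcX; rewrite detZ => E.
  have cn : c != 0 by rewrite /c mulf_neq0 // invr_eq0.
  have : c * c ^+ k.+1 = c * 1 by rewrite mulr1 -exprS {2}/c E mulfK.
  by move/(mulfI cn).
have cpm : c = 1 \/ c = -1.
  have : `|c| ^+ k.+1 == 1 by rewrite -normrX ck normr1.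
  rewrite pexpr_eq1 //.
  case: (lerP 0 c) => hc; first by rewrite ger0_norm // => /eqP; left.
  by rewrite ltr0_norm // => /eqP /(congr1 (fun x => - x)); rewrite opprK; right.
have Hrow : forall i s, B i (g s) = c * A i (g s).
  move=> i s.
  pose f' := fun r : 'I_k.+2 => if r == ord0 then i else f r.
  suff : mxsub f' g B ord0 s = c * mxsub f' g A ord0 s by rewrite !mxE /f' eqxx.
  apply: (@core R k (mxsub f' g A) (mxsub f' g B) c ord0 (Hadj _ _)).
    move=> r /negPf rn t; rewrite !mxE /f' rn.
    by have := congr1 (fun M : 'M[R]_k.+2 => M r t) YcX; rewrite !mxE.
  have [q Hq] := col_nz (ord0 : 'I_k.+2) Hfg.
  exists q; rewrite mxE -(@cof_eq _ _ _ _ f _ g).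
  - by rewrite mxE in Hq.
  - by move=> x; rewrite /f' eq_sym (negPf (neq_lift _ _)).
  - by [].
have BcA : B = c *: A.
  apply/matrixP => i j; rewrite mxE.
  have [p Hp] := row_nz (ord0 : 'I_k.+2) Hfg.
  pose f' := fun r : 'I_k.+2 => if r == p then i else f r.
  pose g' := fun s : 'I_k.+2 => if s == ord0 then j else g s.
  suff : mxsub f' g' B p ord0 = c * mxsub f' g' A p ord0 by rewrite !mxE /f' /g' !eqxx.
  apply: (@core_tr R k (mxsub f' g' A) (mxsub f' g' B) c ord0 (Hadj _ _)).
    by move=> s /negPf sn r; rewrite !mxE /g' sn Hrow.
  exists p; rewrite mxE -(@cof_eq _ _ _ _ f _ g).
  - by rewrite mxE in Hp.
  - by move=> x; rewrite /f' eq_sym (negPf (neq_lift _ _)).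
  - by move=> x; rewrite /g' eq_sym (negPf (neq_lift _ _)).
have cm1 : c = -1 -> ~~ odd k.+1.
  move=> cm; apply/negP => od; move: ck; rewrite cm -signr_odd od expr1 => /eqP.
  by rewrite -subr_eq0 -opprD -mulr2n oppr_eq0 pnatr_eq0.
case: cpm => cv.
  by split; [left|]; rewrite BcA cv scale1r.
split; first by right; rewrite BcA cv scaleN1r opprK.
by move=> od; move: (cm1 cv); rewrite od.
Qed.
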